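(* For every ProbNetKAT program $p$, every $n\in\mathbb{N}$ and all $a,b\subseteq\mathsf{Pk}$, \[ \mathcal{B}[\![p^{(n)}]\!]_{a,b} = \sum_{a'\subseteq\mathsf{Pk}} \big(\mathcal{S}[\![p]\!]^{n+1}\big)_{(a,\emptyset),(a',b)}. \]
   Context: $\mathsf{Pk}$ is a finite set of packets (records of finitely many fields with finitely many values). ProbNetKAT programs are built from predicates $\mathsf{false},\mathsf{true}, f=n$, their negations/disjunctions/conjunctions, assignments $f\leftarrow n$, union $p\,\&\,q$, sequencing $p;q$, probabilistic choice $p\oplus_r q$ and iteration $p^*$. $p^{(0)}=\mathsf{true}$, $p^{(n+1)}=\mathsf{true}\,\&\,(p;p^{(n)})$. The matrix semantics $\mathcal{B}[\![p]\!]\in[0,1]^{2^{\mathsf{Pk}}\times 2^{\mathsf{Pk}}}$ ($[\varphi]$ = Iverson bracket): $\mathcal{B}[\![\mathsf{false}]\!]_{ab}=[b=\emptyset]$; $\mathcal{B}[\![\mathsf{true}]\!]_{ab}=[a=b]$; $\mathcal{B}[\![f=n]\!]_{ab}=[b=\{\pi\in a:\pi.f=n\}]$; $\mathcal{B}[\![\neg t]\!]_{ab}=[b\subseteq a]\mathcal{B}[\![t]\!]_{a,a-b}$; $\mathcal{B}[\![f\leftarrow n]\!]_{ab}=[b=\{\pi[f:=n]:\pi\in a\}]$; $\mathcal{B}[\![p\,\&\,q]\!]_{ab}=\sum_{c,d}[c\cup d=b]\mathcal{B}[\![p]\!]_{ac}\mathcal{B}[\![q]\!]_{ad}$; $\mathcal{B}[\![p;q]\!]=\mathcal{B}[\![p]\!]\mathcal{B}[\![q]\!]$;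 $\mathcal{B}[\![p\oplus_r q]\!]=r\mathcal{B}[\![p]\!]+(1-r)\mathcal{B}[\![q]\!]$; $\mathcal{B}[\![p^*]\!]_{ab}=\lim_n\mathcal{B}[\![p^{(n)}]\!]_{ab}$. The small-step matrix on $2^{\mathsf{Pk}}\times2^{\mathsf{Pk}}$ is $\mathcal{S}[\![p]\!]_{(a,b),(a',b')}=[b'=b\cup a]\,\mathcal{B}[\![p]\!]_{a,a'}$; $\mathcal{S}[\![p]\!]^{m}$ is its $m$-th matrix power. *)

(* Defs.v *)
From HB Require Import structures.
From mathcomp Require Import all_boot all_order all_algebra.
From mathcomp Require Import all_classical all_reals all_analysis.
Set Implicit Arguments. Unset Strict Implicit. Unset Printing Implicit Defensive.
Import Order.TTheory GRing.Theory Num.Theory.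
Import numFieldNormedType.Exports.
Local Open Scope ring_scope.

Section ProbNetKAT.
Variables (R : realType) (F : finType) (V : F -> finType).

Definition Pk : finType := {dffun forall f : F, V f}.

Definition pk_upd (pi : Pk) (f : F) (n : V f) : Pk :=
  [ffun g => @dfwith F (fun h => V h) (fun h => pi h) f n g].

Definition prob := {r : R | 0 <= r <= 1}.

Inductive test :=
| TFalse | TTrue | TEq (f : F) (n : V f)
| TNeg (t : test) | TOr (t u : test) | TAnd (t u : test).

Inductive prog :=
| PTest (t : test)
| PAssign (f : F) (n : V f)
| PUnion (p q : prog)
| PSeq (p q : prog)
| PChoice (p : prog) (r : prob) (q : prog)
| PStar (p : prog).

Fixpoint piter (p : prog) (n : nat) : prog :=
  match n with
  | 0 => PTest TTrue
  | n'.+1 => PUnion (PTest TTrue) (PSeq p (piter p n'))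
  end.

Definition mat (I : finType) := I -> I -> R.
Definition mmul (I : finType) (A B : mat I) : mat I :=
  fun i k => \sum_(j : I) A i j * B j k.
Definition mid (I : finType) : mat I := fun i j => (i == j)%:R.
Fixpoint mpow (I : finType) (A : mat I) (m : nat) : mat I :=
  match m with 0 => @mid I | m'.+1 => mmul (mpow A m') A end.

Definition St := {set Pk}.

Definition munion (M N : mat St) : mat St :=
  fun a b => \sum_(c : St) \sum_(d : St) ((c :|: d) == b)%:R * M a c * N a d.

Definition B_id : mat St := fun a b => (a == b)%:R.

Fixpoint Btest (t : test) : mat St :=
  match t with
  | TFalse => fun a b => (b == finset.set0)%:R
  | TTrue => B_id
  | TEq f n => fun a b => (b == [set pi in a | pi f == n])%:R
  | TNeg t => fun a b => (b \subset a)%:R * Btest t a (a :\: b)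
  | TOr t u => munion (Btest t) (Btest u)
  | TAnd t u => mmul (Btest t) (Btest u)
  end.

Fixpoint Biter (P : mat St) (n : nat) : mat St :=
  match n with
  | 0 => B_id
  | n'.+1 => munion B_id (mmul P (Biter P n'))
  end.

Fixpoint Bsem (p : prog) : mat St :=
  match p with
  | PTest t => Btest t
  | PAssign f n => fun a b => (b == [set pk_upd pi n | pi in a])%:R
  | PUnion p q => munion (Bsem p) (Bsem q)
  | PSeq p q => mmul (Bsem p) (Bsem q)
  | PChoice p r q => fun a b => sval r * Bsem p a b + (1 - sval r) * Bsem q a b
  | PStar p => fun a b => limn (fun n => Biter (Bsem p) n a b)
  end.

Definition Ssem (p : prog) : mat (St * St)%type :=
  fun x y => ((y.2 == x.2 :|: x.1)%:R) * Bsem p x.1 y.1.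

End ProbNetKAT.

(* Main.v *)
Require Import Defs.
From HB Require Import structures.
From mathcomp Require Import all_boot all_order all_algebra.
From mathcomp Require Import all_classical all_reals all_analysis.
Import Order.TTheory GRing.Theory Num.Theory.
Set Implicit Arguments. Unset Strict Implicit. Unset Printing Implicit Defensive.
Local Open Scope ring_scope.

Import numFieldNormedType.Exports.
Section Alg.
Variables (R : realType).

Lemma sum_ind1 (I : finType) (c : I) (G : I -> R) :
  \sum_(i : I) (i == c)%:R * G i = G c.
Proof.
rewrite (bigD1 c) //= eqxx mul1r big1 ?addr0 // => i /negbTE ->; by rewrite mul0r.
Qed.

Lemma sum_ind2 (I : finType) (c : I) (G : I -> R) :
  \sum_(i : I) (c == i)%:R * G i = G c.
Proof. rewrite -[RHS](sum_ind1 c); apply: eq_bigr => i _; by rewrite eq_sym. Qed.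

Lemma mmulA (I : finType) (A B C : mat R I) i k :
  mmul (mmul A B) C i k = mmul A (mmul B C) i k.
Proof.
rewrite /mmul.
under eq_bigr => j _ do rewrite big_distrl /=.
rewrite exchange_big /=; apply: eq_bigr => l _.
rewrite big_distrr /=; apply: eq_bigr => j _; by rewrite mulrA.
Qed.

Lemma mpowSl (I : finType) (A : mat R I) m i k :
  mpow A m.+1 i k = mmul A (mpow A m) i k.
Proof.
elim: m i k => [|m IH] i k.
  rewrite /= /mmul /mid.
  rewrite (eq_bigr (fun j => (j == i)%:R * A j k)); last by move=> j _; rewrite eq_sym.
  rewrite sum_ind1. rewrite (eq_bigr (fun j => (j == k)%:R * A i j)); last first.
    by move=> j _; rewrite mulrC.
  by rewrite sum_ind1.
change (mmul (mpow A m.+1) A i k = mmul A (mpow A m.+1) i k).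
transitivity (mmul (mmul A (mpow A m)) A i k).
  rewrite /mmul; apply: eq_bigr => j _; by rewrite IH.
by rewrite mmulA.
Qed.
End Alg.
Section P1.
Variables (R : realType) (F : finType) (V : F -> finType).
Notation St := (St V).
Notation mat := (mat R).

Lemma mpow1 (I : finType) (A : mat I) i k : mpow A 1 i k = A i k.
Proof. by rewrite /= /mmul /mid sum_ind2. Qed.

Lemma munion_idl (X : mat St) a b :
  munion (@B_id R F V) X a b = \sum_d ((a :|: d) == b)%:R * X a d.
Proof.
rewrite /munion /B_id.
under eq_bigr => c _ do under eq_bigr => d _ do rewrite mulrAC mulrC.
under eq_bigr => c _ do rewrite -big_distrr /=.
by rewrite sum_ind2.
Qed.

Lemma Biter_S (P : mat St) n a b :
  Biter P n.+1 a b = \sum_d ((a :|: d) == b)%:R * \sum_e P a e * Biter P n e d.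
Proof. by rewrite /= munion_idl. Qed.

Definition SP (P : mat St) : mat (St * St)%type :=
  fun x y => ((y.2 == x.2 :|: x.1)%:R) * P x.1 y.1.

Lemma part1 (P : mat St) (hP : forall a, \sum_b P a b = 1) n a c b :
  \sum_a' mpow (SP P) n.+1 (a, c) (a', b) =
  \sum_d ((c :|: d) == b)%:R * Biter P n a d.
Proof.
elim: n a c b => [|n IH] a c b.
  under eq_bigr => a' _ do rewrite mpow1 /SP /=.
  rewrite -big_distrr /= hP mulr1 /=.
  under eq_bigr => d _ do rewrite /B_id mulrC.
  by rewrite sum_ind2 eq_sym.
pose H e c' := \sum_d ((c' :|: d) == b)%:R * Biter P n e d.
transitivity (\sum_e P a e * H e (c :|: a)).
  under eq_bigr => a' _ do rewrite mpowSl /mmul.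
  rewrite exchange_big /=.
  under eq_bigr => y _ do rewrite -big_distrr /=.
  transitivity (\sum_(y : St * St) SP P (a, c) y * H y.1 y.2).
    by apply: eq_bigr => -[y1 y2] _; rewrite IH.
  rewrite -(pair_bigA _ (fun y1 y2 => SP P (a, c) (y1, y2) * H y1 y2)) /=.
  apply: eq_bigr => e _; rewrite /SP /=.
  under eq_bigr => c' _ do rewrite mulrAC -mulrA.
  by rewrite sum_ind1 mulrC.

transitivity (\sum_d' ((c :|: (a :|: d')) == b)%:R * \sum_e P a e * Biter P n e d').
  rewrite /H.
  under eq_bigr => e _ do rewrite big_distrr /=.
  rewrite exchange_big /=; apply: eq_bigr => d _.
  rewrite big_distrr /= finset.setUA; apply: eq_bigr => e _.
  by rewrite mulrCA.
under [RHS]eq_bigr => d _ do rewrite Biter_S big_distrr /=.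
rewrite [RHS]exchange_big /=; apply: eq_bigr => d' _.
under [RHS]eq_bigr => d _ do rewrite mulrCA.
by rewrite sum_ind2.
Qed.
End P1.
Section P2.
Variables (R : realType) (F : finType) (V : F -> finType).
Notation St := (St V).
Notation mat := (mat R).

Lemma cvg_sum_seq (I : Type) (r : seq I) (Pr : pred I) (f : I -> nat -> R) :
  (forall i, Pr i -> cvgn (f i)) ->
  cvgn (fun n => \sum_(i <- r | Pr i) f i n) /\
  limn (fun n => \sum_(i <- r | Pr i) f i n) = \sum_(i <- r | Pr i) limn (f i).
Proof.
move=> hf; elim: r => [|x r [IH1 IH2]].
  have -> : (fun n => \sum_(i <- [::] | Pr i) f i n) = fun=> 0.
    by apply: funext => n; rewrite big_nil.
  rewrite big_nil; split; [exact: is_cvg_cst | exact: lim_cst].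
rewrite big_cons; case hx: (Pr x).
  have -> : (fun n => \sum_(i <- x :: r | Pr i) f i n) =
      (f x \+ (fun n => \sum_(i <- r | Pr i) f i n)).
    by apply: funext => n; rewrite big_cons hx.
  split; first exact: is_cvgD (hf x hx) IH1.
  rewrite limD; [by rewrite IH2 | exact: hf x hx | exact: IH1].
have -> : (fun n => \sum_(i <- x :: r | Pr i) f i n) =
    (fun n => \sum_(i <- r | Pr i) f i n).
  by apply: funext => n; rewrite big_cons hx.
by split.
Qed.

Lemma sum_indc (I : finType) (c : I) : \sum_(i : I) ((c == i)%:R : R) = 1.
Proof.
rewrite (bigD1 c) //= eqxx big1 ?addr0 // => i; by rewrite eq_sym => /negbTE ->.
Qed.

Definition stoch (P : mat St) :=
  (forall a b, 0 <= P a b) /\ (forall a, \sum_b P a b = 1).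

Lemma stoch_det (f : St -> St) : stoch (fun a b => (b == f a)%:R).
Proof.
split=> [a b|a]; first exact: ler0n.
by under eq_bigr do rewrite eq_sym; rewrite sum_indc.
Qed.

Lemma stoch_munion M N : stoch M -> stoch N -> stoch (munion M N).
Proof.
move=> [M0 M1] [N0 N1]; split=> [a b|a].
  apply: sumr_ge0 => c _; apply: sumr_ge0 => d _.
  by rewrite mulr_ge0 ?mulr_ge0 ?ler0n.
rewrite /munion exchange_big /=.
under eq_bigr => c _ do rewrite exchange_big /=.
transitivity (\sum_c \sum_d M a c * N a d).
  apply: eq_bigr => c _; apply: eq_bigr => d _.
  under eq_bigr do rewrite -mulrA.
  by rewrite -big_distrl /= sum_indc mul1r.
under eq_bigr => c _ do rewrite -big_distrr /= N1 mulr1.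
exact: M1.
Qed.

Lemma stoch_mmul M N : stoch M -> stoch N -> stoch (mmul M N).
Proof.
move=> [M0 M1] [N0 N1]; split=> [a b|a].
  by apply: sumr_ge0 => c _; rewrite mulr_ge0.
rewrite /mmul exchange_big /=.
under eq_bigr => c _ do rewrite -big_distrr /= N1 mulr1.
exact: M1.
Qed.

Lemma stoch_id : stoch (@B_id R F V).
Proof. split=> [a b|a]; [exact: ler0n | exact: sum_indc]. Qed.

Lemma stoch_Biter P n : stoch P -> stoch (Biter P n).
Proof.
move=> hP; elim: n => [|n IH] /=.
  exact: stoch_id.
apply: stoch_munion; first exact: stoch_id.
exact: stoch_mmul.
Qed.

Definition G (P : mat St) (n : nat) (a S : St) := \sum_(b : St) (b \subset S)%:R * Biter P n a b.

Lemma G_S P n a S : G P n.+1 a S = (a \subset S)%:R * \sum_e P a e * G P n e S.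
Proof.
rewrite /G.
under eq_bigr => b _ do rewrite Biter_S big_distrr /=.
rewrite exchange_big /=.
under eq_bigr => d _ do (under eq_bigr => b _ do rewrite mulrCA; rewrite sum_ind2).
under eq_bigr => d _ do rewrite finset.subUset -mulnb natrM -mulrA.
rewrite -big_distrr /=; congr (_ * _).
under eq_bigr => d _ do rewrite big_distrr /=.
rewrite exchange_big /=; apply: eq_bigr => e _.
rewrite big_distrr /=; apply: eq_bigr => d _.
by rewrite mulrCA.
Qed.

Lemma G_0 P a S : G P 0 a S = (a \subset S)%:R.
Proof. by rewrite /G /= /B_id; under eq_bigr do rewrite mulrC; rewrite sum_ind2. Qed.

Lemma G_ge0 P n a S : stoch P -> 0 <= G P n a S.
Proof.
move=> hP; apply: sumr_ge0 => b _; rewrite mulr_ge0 ?ler0n //.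
by case: (stoch_Biter n hP) => h _; apply: h.
Qed.

Lemma G_decr P S : stoch P -> forall n a, G P n.+1 a S <= G P n a S.
Proof.
move=> [P0 P1] n; elim: n => [|n IH] a.
  rewrite G_S G_0 -[X in _ <= X]mulr1; apply: ler_wpM2l; first exact: ler0n.
  rewrite -(P1 a); apply: ler_sum => e _; rewrite G_0.
  by case: (e \subset S); rewrite ?mulr1 ?mulr0.
rewrite [X in X <= _]G_S [X in _ <= X]G_S.
apply: ler_wpM2l; first exact: ler0n.
by apply: ler_sum => e _; apply: ler_wpM2l.
Qed.

Lemma G_cvg P S a : stoch P -> cvgn (fun n => G P n a S).
Proof.
move=> hP; apply: nonincreasing_is_cvgn.
  by apply/nonincreasing_seqP => n; apply: G_decr.
by exists 0 => _ [n _ <-]; apply: G_ge0.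
Qed.

Lemma Biter_cvg P a : stoch P -> forall b, cvgn (fun n => Biter P n a b).
Proof.
move=> hP b.
move: {2}#|b|.+1 (ltnSn #|b|) => k; elim: k b => [//|k IH] b hb.
have E : forall n, Biter P n a b =
   G P n a b - \sum_(b' : St | (b' \subset b) && (b' != b)) Biter P n a b'.
  move=> n; rewrite /G.
  rewrite (eq_bigr (fun b' : St => if b' \subset b then Biter P n a b' else 0)); last first.
    by move=> b' _; case: (b' \subset b); rewrite ?mul1r ?mul0r.
  rewrite -big_mkcond /= (bigD1 b) //=.
  by rewrite addrK.
have -> : (fun n => Biter P n a b) = (fun n => G P n a b) \- 
   (fun n => \sum_(b' : St | (b' \subset b) && (b' != b)) Biter P n a b').
  by apply: funext => n; rewrite E.
apply: is_cvgB; first exact: G_cvg.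
have hs : forall b' : St, (b' \subset b) && (b' != b) -> cvgn (fun n => Biter P n a b').
  move=> b' /andP[sb nb]; apply: IH.
  have : b' \proper b by rewrite finset.properEneq nb sb.
  move/proper_card => lt; exact: (leq_trans lt).
exact: (@cvg_sum_seq _ (index_enum _) (fun b' : St => (b' \subset b) && (b' != b))
   (fun (b' : St) n => Biter P n a b') hs).1.
Qed.

Lemma stoch_star P : stoch P ->
  stoch (fun a b => limn (fun n => Biter P n a b)).
Proof.
move=> hP; split=> [a b|a].
  apply: limr_ge; first exact: Biter_cvg.
  apply: nearW => n; by case: (stoch_Biter n hP) => h _; apply: h.
have [_ <-] := @cvg_sum_seq _ (index_enum _) xpredT (fun b n => Biter P n a b)
   (fun b _ => @Biter_cvg P a hP b).
have -> : (fun n => \sum_(b <- index_enum _ | xpredT b) Biter P n a b) = fun=> 1.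
  by apply: funext => n; case: (stoch_Biter n hP) => _ h; apply: h.
exact: lim_cst.
Qed.
End P2.
Section P3.
Variables (R : realType) (F : finType) (V : F -> finType).
Notation St := (St V).
Notation mat := (mat R).

Lemma neg_bool (a b c : St) : c \subset a ->
  (b \subset a) && (a :\: b == c) = (b == a :\: c).
Proof.
move=> ca; apply/idP/idP.
  move/andP=> [ba /eqP <-]; apply/eqP.
  by rewrite finset.setDDr finset.setDv finset.set0U; apply/esym/finset.setIidPr.
move/eqP->; rewrite finset.subsetDl /=; apply/eqP.
by rewrite finset.setDDr finset.setDv finset.set0U; apply/finset.setIidPr.
Qed.

Lemma test_det (t : test V) : exists f : St -> St,
  (forall a, f a \subset a) /\ forall a b, @Btest R F V t a b = (b == f a)%:R.
Proof.
elim: t => [||g n|t [f [fs fe]]|t [f [fs fe]] u [h [hs he]]|t [f [fs fe]] u [h [hs he]]].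
- by exists (fun=> finset.set0); split=> // a; exact: finset.sub0set.
- by exists id; split=> // a b /=; rewrite /B_id eq_sym.
- exists (fun a : St => [set pi in a | (pi : Pk V) g == n]); split=> // a.
  by apply/fintype.subsetP => x; rewrite finset.inE => /andP[].
- exists (fun a => a :\: f a); split=> [a|a b]; first exact: finset.subsetDl.
  by rewrite /= fe -natrM mulnb neg_bool.
- exists (fun a => f a :|: h a); split=> [a|a b]; first by rewrite finset.subUset fs hs.
  rewrite /= /munion.
  under eq_bigr => c _ do (under eq_bigr => d _ do rewrite fe he mulrC; rewrite sum_ind1).
  under eq_bigr => c _ do rewrite mulrC; rewrite sum_ind1.
  by rewrite eq_sym.
- exists (fun a => h (f a)); split=> [a|a b]; first exact: fintype.subset_trans (hs _) (fs _).
  by rewrite /= /mmul; under eq_bigr => e _ do rewrite fe he; rewrite sum_ind1.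
Qed.

Lemma stoch_ext (P Q : mat St) : (forall a b, P a b = Q a b) -> stoch Q -> stoch P.
Proof.
move=> e [h1 h2]; split=> [a b|a]; first by rewrite e.
by under eq_bigr do rewrite e; apply: h2.
Qed.

Lemma all_stoch (p : prog R V) : stoch (Bsem p).
Proof.
elim: p => [t|g n|p hp q hq|p hp q hq|p hp r q hq|p hp] /=.
- have [f [_ fe]] := test_det t.
  apply: (stoch_ext fe); exact: stoch_det.
- exact: stoch_det.
- exact: stoch_munion.
- exact: stoch_mmul.
- case: hp => [p0 p1]; case: hq => [q0 q1].
  have /andP[r0 r1] := svalP r.
  split=> [a b|a].
    by rewrite addr_ge0 // mulr_ge0 // subr_ge0.
  by rewrite big_split /= -!big_distrr /= p1 q1 !mulr1 addrC subrK.
- exact: stoch_star.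
Qed.

Lemma Bsem_piter (p : prog R V) n : Bsem (piter p n) = Biter (Bsem p) n.
Proof. by elim: n => [|n IH] //=; rewrite IH. Qed.
End P3.

Unset Implicit Arguments.
Theorem proposition4p2 (R : realType) (F : finType) (V : F -> finType)
  (p : prog R V) (n : nat) (a b : St V) :
  Bsem (piter p n) a b =
  \sum_(a' : St V) mpow (Ssem p) n.+1 (a, finset.set0) (a', b).
Proof.
rewrite Bsem_piter.
have [_ h1] := all_stoch p.
rewrite (@part1 R F V (Bsem p) h1 n a finset.set0 b).
under eq_bigr do rewrite finset.set0U.
by rewrite sum_ind1.
Qed.
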